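(* Let $\mathcal{G}$ be a simple temporal clique with vertex set $V$, let $X^-$ be the set of emitters produced by the forward construction and $X^+$ the set of collectors produced by the backward construction, and assume $X^-\cup X^+=V$. (i) If there is an emitter $u\in X^-$ with $e^-(u)=\{u,v\}$ such that $\{u,v\}$ is not the edge of smallest label among the edges $\{v,x\}$ with $x\in X^-$, then $\mathcal{G}$ has a $2$-hop dismountable vertex. (ii) If there is a collector $c\in X^+$ with $e^+(c)=\{c,y\}$ such that $\{c,y\}$ is not the edge of largest label among the edges $\{y,z\}$ with $z\in X^+$, then $\mathcal{G}$ has a $2$-hop dismountable vertex.
   Context: A simple temporal clique is a pair $\mathcal{G}=(G,\lambda)$ where $G=(V,E)$ is the complete graph on a finite vertex set $V$ and $\lambda:E\to\mathbb{N}$ assigns to each edge a single integer label such that any two distinct edges sharing an endpoint have different labels; the label of an arc $(x,y)$ is $\lambda(\{x,y\})$. A journey from $x$ to $y$ is a sequence of vertices $x=u_0,\dots,u_k=y$ ($k\ge1$) with $\lambda(\{u_{i-1},u_i\})<\lambda(\{u_i,u_{i+1}\})$ for $1\le i<k$; its length is $k$, its first edge is $\{u_0,u_1\}$ and its last edge is $\{u_{k-1},u_k\}$. For a vertex $v$, $e^-(v)$ (resp. $e^+(v)$) is the edge incident to $v$ with smallest (resp. largest) label. A vertex $x$ is $2$-hop dismountable if there exist vertices $y,z\ne x$ (possibly $y=z$) such that there is a journey of length at most $2$ from $x$ to $y$ whose last edge is $e^-(y)$, and a journey of length at most $2$ from $z$ to $x$ whose first edge is $e^+(z)$. Forward construction: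 let $E^-$ be the set of arcs $(u,v)$ with $\{u,v\}=e^-(v)$, except that if $e^-(u)=e^-(v)=\{u,v\}$ only one of $(u,v),(v,u)$ is included (arbitrarily). Initialize $E^-_T:=E^-$; for every vertex $v$ of out-degree at least $2$ in $(V,E^-)$, with out-arcs $(v,u_1),\dots,(v,u_\ell)$ where $(v,u_\ell)$ has the largest label, for each $i<\ell$: if $u_i$ has out-degree $0$ in $(V,E^-)$ replace $(v,u_i)$ by $(u_i,v)$ in $E^-_T$, otherwise remove $(v,u_i)$ from $E^-_T$. Emitters are vertices of out-degree $0$ in $(V,E^-_T)$. Backward construction: let $E^+$ be the set of arcs $(v,u)$ with $\{u,v\}=e^+(v)$, except that if $e^+(u)=e^+(v)=\{u,v\}$ only one of $(u,v),(v,u)$ is included (arbitrarily). Initialize $E^+_T:=E^+$; for every vertex $v$ of in-degree at least $2$ in $(V,E^+)$, with in-arcs $(u_1,v),\dots,(u_\ell,v)$ where $(u_\ell,v)$ has the smallest label, for each $i<\ell$: if $u_i$ has in-degree $0$ in $(V,E^+)$ replace $(u_i,v)$ by $(v,u_i)$ in $E^+_T$, otherwise remove $(u_i,v)$ from $E^+_T$. Collectors are vertices of in-degree $0$ in $(V,E^+_T)$. *)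

(* Defs.v *)
From mathcomp Require Import all_boot.
Set Implicit Arguments. Unset Strict Implicit. Unset Printing Implicit Defensive.

Section TemporalClique.
Variable T : finType.
Variable lam : T -> T -> nat.  (* lam x y = label of the edge {x,y}, x <> y *)

Definition simple_temporal_clique : Prop :=
  (forall x y, lam x y = lam y x) /\
  (forall x y z, x != y -> x != z -> y != z -> lam x y != lam x z).

Definition is_emin (v u : T) : Prop :=
  u != v /\ forall x, x != v -> x != u -> lam v u < lam v x.
Definition is_emax (v u : T) : Prop :=
  u != v /\ forall x, x != v -> x != u -> lam v x < lam v u.

(* journey from x: the vertex sequence x :: s (length = size s >= 1),
   consecutive vertices distinct, labels strictly increasing. *)
Definition is_journey (x : T) (s : seq T) : bool :=
  [&& s != [::], path (fun a b => a != b) x s & sorted ltn (pairmap lam x s)].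

Definition jend (x : T) (s : seq T) : T := last x s.
Definition jsecond (x : T) (s : seq T) : T := head x s.
Definition jpenult (x : T) (s : seq T) : T := nth x (x :: s) (size s).-1.

Definition two_hop_dismountable (x : T) : Prop :=
  (exists y s, y != x /\ is_journey x s /\ size s <= 2 /\ jend x s = y /\
      is_emin y (jpenult x s)) /\
  (exists z s, z != x /\ is_journey z s /\ size s <= 2 /\ jend z s = x /\
      is_emax z (jsecond z s)).

Definition outdeg0 (R : T -> T -> Prop) v := forall u, ~ R v u.
Definition indeg0 (R : T -> T -> Prop) v := forall u, ~ R u v.
Definition outdeg_ge2 (R : T -> T -> Prop) v :=
  exists u1 u2, u1 != u2 /\ R v u1 /\ R v u2.
Definition indeg_ge2 (R : T -> T -> Prop) v :=
  exists u1 u2, u1 != u2 /\ R u1 v /\ R u2 v.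
Definition max_outarc (R : T -> T -> Prop) v u :=
  R v u /\ forall u', R v u' -> u' != u -> lam v u' < lam v u.
Definition min_inarc (R : T -> T -> Prop) v u :=
  R u v /\ forall u', R u' v -> u' != u -> lam u v < lam u' v.

(* Em is an admissible E^- : arcs (u,v) with {u,v} = e^-(v), where in the
   mutual case exactly one of the two arcs is kept (arbitrary choice). *)
Definition Eminus_spec (Em : T -> T -> Prop) : Prop :=
  (forall u v, Em u v -> is_emin v u) /\
  (forall u v, is_emin v u -> ~ is_emin u v -> Em u v) /\
  (forall u v, is_emin v u -> is_emin u v -> (Em u v <-> ~ Em v u)).

Definition Eplus_spec (Ep : T -> T -> Prop) : Prop :=
  (forall v u, Ep v u -> is_emax v u) /\
  (forall v u, is_emax v u -> ~ is_emax u v -> Ep v u) /\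
  (forall v u, is_emax v u -> is_emax u v -> (Ep v u <-> ~ Ep u v)).

(* E^-_T, the result of the forward construction applied to E^- = Em:
   arcs of Em kept (tail of out-degree < 2, or the largest-label out-arc),
   plus reversed arcs (v,u_i) -> (u_i,v) where u_i had out-degree 0. *)
Definition EminusT (Em : T -> T -> Prop) (a b : T) : Prop :=
  (Em a b /\ (~ outdeg_ge2 Em a \/ max_outarc Em a b)) \/
  (Em b a /\ outdeg_ge2 Em b /\ ~ max_outarc Em b a /\ outdeg0 Em a).

Definition EplusT (Ep : T -> T -> Prop) (a b : T) : Prop :=
  (Ep a b /\ (~ indeg_ge2 Ep b \/ min_inarc Ep b a)) \/
  (Ep b a /\ indeg_ge2 Ep a /\ ~ min_inarc Ep a b /\ indeg0 Ep b).

Definition emitter (Em : T -> T -> Prop) (v : T) : Prop := outdeg0 (EminusT Em) v.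
Definition collector (Ep : T -> T -> Prop) (v : T) : Prop := indeg0 (EplusT Ep) v.

End TemporalClique.

(* Main.v *)
Require Import Defs.
From Stdlib Require Import ClassicalEpsilon Classical.
From mathcomp Require Import all_boot.
From mathcomp Require Import zify.
Set Implicit Arguments. Unset Strict Implicit.

Definition pb (P : Prop) : bool :=
  if excluded_middle_informative P then true else false.

Lemma pbP (P : Prop) : reflect P (pb P).
Proof. rewrite /pb; case: excluded_middle_informative => h; by constructor. Qed.

Lemma emin_ex (T : finType) (lam : T -> T -> nat) (a : T) :
  simple_temporal_clique lam -> (exists w : T, w != a) -> exists w, is_emin lam a w.
Proof.
move=> [Hsym Hd] [w0 hw0].
exists [arg min_(w < w0 | w != a) lam a w].
case: arg_minnP => // m hm hmin; split=> // x hxa hxm.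
rewrite ltn_neqAle hmin // andbT; apply: Hd; by rewrite // eq_sym.
Qed.

Lemma emitter_noout (T : finType) (lam : T -> T -> nat) (Em : T -> T -> Prop) (a b : T) :
  simple_temporal_clique lam -> Eminus_spec lam Em -> emitter lam Em a -> ~ Em a b.
Proof.
move=> [Hsym Hd] [S1 [S2 S3]] He hab.
case: (classic (outdeg_ge2 Em a)) => hg; last first.
  by apply: (He b); left; split=> //; left.
have hb : pb (Em a b) by apply/pbP.
have := @arg_maxnP _ b (fun m => pb (Em a m)) (fun m => lam a m) hb.
case=> m /pbP hm hmax.
apply: (He m); left; split=> //; right; split=> // u' hu' hne.
have hle : lam a u' <= lam a m by apply: hmax; apply/pbP.
rewrite ltn_neqAle hle andbT; apply: Hd.
- by case: (S1 _ _ hu').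
- by case: (S1 _ _ hm).
- done.
Qed.

Lemma emitter_parent (T : finType) (lam : T -> T -> nat) (Em : T -> T -> Prop) (a w : T) :
  simple_temporal_clique lam -> Eminus_spec lam Em -> emitter lam Em a ->
  is_emin lam a w -> Em w a.
Proof.
move=> Hs HS He hw; have HS' := HS; case: HS' => [S1 [S2 S3]].
case: (classic (is_emin lam w a)) => h.
  by apply/(S3 _ _ hw h) => h'; apply: (emitter_noout Hs HS He h').
exact: S2.
Qed.

Lemma emitter_inj (T : finType) (lam : T -> T -> nat) (Em : T -> T -> Prop) (a a' b : T) :
  simple_temporal_clique lam -> Eminus_spec lam Em -> emitter lam Em a -> emitter lam Em a' ->
  Em b a -> Em b a' -> a = a'.
Proof.
move=> Hs HS He He' h h'.
case: (eqVneq a a') => // ne; exfalso.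
have og : outdeg_ge2 Em b by exists a, a'.
have ma : max_outarc lam Em b a.
  apply: NNPP => hn; apply: (He b); right; split=> //; split=> //; split=> //.
  by move=> u; apply: (emitter_noout Hs HS He).
have ma' : max_outarc lam Em b a'.
  apply: NNPP => hn; apply: (He' b); right; split=> //; split=> //; split=> //.
  by move=> u; apply: (emitter_noout Hs HS He').
have l1 := ma.2 a' h' ltac:(by rewrite eq_sym).
have l2 := ma'.2 a h ne.
lia.
Qed.

Lemma emax_ex (T : finType) (lam : T -> T -> nat) (a : T) :
  simple_temporal_clique lam -> (exists w : T, w != a) -> exists w, is_emax lam a w.
Proof.
move=> [Hsym Hd] [w0 hw0].
exists [arg max_(w > w0 | w != a) lam a w].
case: arg_maxnP => // m hm hmax; split=> // x hxa hxm.
have hle : lam a x <= lam a m by apply: hmax.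
rewrite ltn_neqAle hle andbT; apply: Hd; by rewrite // eq_sym.
Qed.

Lemma collector_noin (T : finType) (lam : T -> T -> nat) (Ep : T -> T -> Prop) (c b : T) :
  simple_temporal_clique lam -> Eplus_spec lam Ep -> collector lam Ep c -> ~ Ep b c.
Proof.
move=> [Hsym Hd] [S1 [S2 S3]] Hc hbc.
case: (classic (indeg_ge2 Ep c)) => hg; last first.
  by apply: (Hc b); left; split=> //; left.
have hb : pb (Ep b c) by apply/pbP.
have := @arg_minnP _ b (fun m => pb (Ep m c)) (fun m => lam m c) hb.
case=> m /pbP hm hmin.
apply: (Hc m); left; split=> //; right; split=> // u' hu' hne.
have hle : lam m c <= lam u' c by apply: hmin; apply/pbP.
rewrite ltn_neqAle hle andbT (Hsym m c) (Hsym u' c); apply: Hd.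
- by have [h _] := S1 _ _ hm.
- by have [h _] := S1 _ _ hu'.
- by rewrite eq_sym.
Qed.

Lemma collector_child (T : finType) (lam : T -> T -> nat) (Ep : T -> T -> Prop) (c q : T) :
  simple_temporal_clique lam -> Eplus_spec lam Ep -> collector lam Ep c ->
  is_emax lam c q -> Ep c q.
Proof.
move=> Hs HS Hc hq; have HS' := HS; case: HS' => [S1 [S2 S3]].
case: (classic (is_emax lam q c)) => h.
  by apply/(S3 _ _ hq h) => h'; apply: (collector_noin Hs HS Hc h').
exact: S2.
Qed.

Lemma collector_inj (T : finType) (lam : T -> T -> nat) (Ep : T -> T -> Prop) (c c' b : T) :
  simple_temporal_clique lam -> Eplus_spec lam Ep -> collector lam Ep c -> collector lam Ep c' ->
  Ep c b -> Ep c' b -> c = c'.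
Proof.
move=> Hs HS Hc Hc' h h'.
case: (eqVneq c c') => // ne; exfalso.
have ig : indeg_ge2 Ep b by exists c, c'.
have ma : min_inarc lam Ep b c.
  apply: NNPP => hn; apply: (Hc b); right; split=> //; split=> //; split=> //.
  by move=> u; apply: (collector_noin Hs HS Hc).
have ma' : min_inarc lam Ep b c'.
  apply: NNPP => hn; apply: (Hc' b); right; split=> //; split=> //; split=> //.
  by move=> u; apply: (collector_noin Hs HS Hc').
have l1 := ma.2 c' h' ltac:(by rewrite eq_sym).
have l2 := ma'.2 c h ne.
lia.
Qed.

Lemma card_emit (T : finType) (lam : T -> T -> nat) (Em : T -> T -> Prop) :
  simple_temporal_clique lam -> Eminus_spec lam Em -> (forall a : T, exists w, w != a) ->
  2 * #|[set a | pb (emitter lam Em a)]| <= #|T|.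
Proof.
move=> Hs HS nt.
set E := [set a | pb (emitter lam Em a)].
set N := [set b | pb (exists a, Em b a)].
have h1 : E \subset ~: N.
  apply/subsetP => a; rewrite !inE => /pbP He; apply/pbP => -[a' h].
  exact: (emitter_noout Hs HS He h).
pose p a := odflt a [pick b | pb (Em b a)].
have hp : forall a, a \in E -> Em (p a) a.
  move=> a; rewrite inE => /pbP He.
  have [w hw] := emin_ex Hs (nt a).
  have hw' := emitter_parent Hs HS He hw.
  rewrite /p; case: pickP => [b /pbP //|H].
  by have := H w; move/negbT/pbP.
have h2 : #|E| <= #|N|.
  rewrite -(@card_in_imset _ _ p E).
    apply: subset_leq_card; apply/subsetP => b /imsetP [a ha ->].
    by rewrite inE; apply/pbP; exists a; apply: hp.
  move=> a a' ha ha' e.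
  move: (ha) (ha'); rewrite !inE => /pbP He /pbP He'.
  apply: (emitter_inj Hs HS He He' (hp a ha)); rewrite e; exact: hp.
have h3 := subset_leq_card h1.
have h5 := cardsC N.
have h4 : #|N| <= #|T| by apply: max_card.
lia.
Qed.

Lemma card_coll (T : finType) (lam : T -> T -> nat) (Ep : T -> T -> Prop) :
  simple_temporal_clique lam -> Eplus_spec lam Ep -> (forall a : T, exists w, w != a) ->
  2 * #|[set a | pb (collector lam Ep a)]| <= #|T|.
Proof.
move=> Hs HS nt.
set E := [set a | pb (collector lam Ep a)].
set N := [set b | pb (exists a, Ep a b)].
have h1 : E \subset ~: N.
  apply/subsetP => a; rewrite !inE => /pbP He; apply/pbP => -[a' h].
  exact: (collector_noin Hs HS He h).
pose p a := odflt a [pick b | pb (Ep a b)].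
have hp : forall a, a \in E -> Ep a (p a).
  move=> a; rewrite inE => /pbP He.
  have [w hw] := emax_ex Hs (nt a).
  have hw' := collector_child Hs HS He hw.
  rewrite /p; case: pickP => [b /pbP //|H].
  by have := H w; move/negbT/pbP.
have h2 : #|E| <= #|N|.
  rewrite -(@card_in_imset _ _ p E).
    apply: subset_leq_card; apply/subsetP => b /imsetP [a ha ->].
    by rewrite inE; apply/pbP; exists a; apply: hp.
  move=> a a' ha ha' e.
  move: (ha) (ha'); rewrite !inE => /pbP He /pbP He'.
  apply: (collector_inj Hs HS He He' (hp a ha)); rewrite e; exact: hp.
have h3 := subset_leq_card h1.
have h5 := cardsC N.
have h4 : #|N| <= #|T| by apply: max_card.
lia.
Qed.

Lemma disj (T : finType) (lam : T -> T -> nat) (Em Ep : T -> T -> Prop) :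
  simple_temporal_clique lam -> Eminus_spec lam Em -> Eplus_spec lam Ep ->
  (forall v : T, emitter lam Em v \/ collector lam Ep v) ->
  (forall a : T, exists w, w != a) ->
  forall a, emitter lam Em a -> collector lam Ep a -> False.
Proof.
move=> Hs HSm HSp Hu nt a He Hc.
have c1 := card_emit Hs HSm nt.
have c2 := card_coll Hs HSp nt.
set E := [set a | pb (emitter lam Em a)] in c1.
set C := [set a | pb (collector lam Ep a)] in c2.
have hU : E :|: C = setT.
  apply/setP => x; rewrite !inE; apply/orP; case: (Hu x) => h; [left|right]; by apply/pbP.
have hI := cardsUI E C.
rewrite hU cardsT in hI.
have : a \in E :&: C by rewrite !inE; apply/andP; split; apply/pbP.
move=> ha.
have : 0 < #|E :&: C| by apply/card_gt0P; exists a.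
lia.
Qed.

Theorem lemma7 (T : finType) (lam : T -> T -> nat) (Em Ep : T -> T -> Prop) :
  simple_temporal_clique lam ->
  Eminus_spec lam Em ->
  Eplus_spec lam Ep ->
  (forall v : T, emitter lam Em v \/ collector lam Ep v) ->
  ((exists u v : T, emitter lam Em u /\ is_emin lam u v /\
      ~ (forall x : T, emitter lam Em x -> x != v -> lam v u <= lam v x)) ->
     exists x : T, two_hop_dismountable lam x) /\
  ((exists c y : T, collector lam Ep c /\ is_emax lam c y /\
      ~ (forall z : T, collector lam Ep z -> z != y -> lam y z <= lam y c)) ->
     exists x : T, two_hop_dismountable lam x).
Proof.
move=> Hs HSm HSp Hu.
have Hs' := Hs; case: Hs' => [Hsym Hd].
have HSp' := HSp; case: HSp' => [P1 [P2 P3]].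
have HSm' := HSm; case: HSm' => [M1 [M2 M3]].
have nt2 : forall p q : T, p != q -> forall a : T, exists w, w != a.
  move=> p q pq a; case: (eqVneq p a) => [<-|pa]; last by exists p.
  by exists q; rewrite eq_sym.
split.
- move=> [u [v [eu [huv Hn]]]].
  have [x [ex [xv lt]]] : exists x, emitter lam Em x /\ x != v /\ lam v x < lam v u.
    apply: NNPP => H; apply: Hn => x ex xv; rewrite leqNgt; apply/negP => lt.
    by apply: H; exists x.
  have nt := nt2 _ _ (proj1 huv).
  have ncx : ~ collector lam Ep x := disj Hs HSm HSp Hu nt ex.
  exists x; split.
  + exists u, [:: v; u]; split.
      by apply/eqP => e; subst; rewrite ltnn in lt.
    split; last by [].
    rewrite /is_journey /= xv (proj1 huv) andbT /= Hsym lt //.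
  + have [a ha] : exists a, EplusT lam Ep a x.
      by apply: NNPP => H; apply: ncx => a ha; apply: H; exists a.
    case: ha => [[hax _]|[hxa [_ [hnm _]]]].
    * have [h1 _] := P1 _ _ hax.
      exists a, [:: x]; split; first by rewrite eq_sym.
      split; first by rewrite /is_journey /= eq_sym h1.
      split=> //; split=> //; exact: P1 _ _ hax.
    * have [u' [h1 [h2 h3]]] : exists u', Ep u' a /\ u' != x /\ lam u' a <= lam x a.
        apply: NNPP => H; apply: hnm; split=> // u' h1 h2; rewrite ltnNge; apply/negP => h3.
        by apply: H; exists u'.
      have [q1 _] := P1 _ _ h1.
      have [q2 _] := P1 _ _ hxa.
      exists u', [:: a; x]; split=> //.
      split; last by split=> //; split=> //; exact: P1 _ _ h1.
      rewrite /is_journey /= q2 andbT.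
      have -> : (u' != a) by rewrite eq_sym.
      have hne : lam a u' != lam a x by apply: Hd.
      rewrite /= andbT (Hsym a x) ltn_neqAle h3 andbT -(Hsym a u') -(Hsym a x) hne //.
- move=> [c [y [ec [hcy Hn]]]].
  have [z [ez [zy lt]]] : exists z, collector lam Ep z /\ z != y /\ lam y c < lam y z.
    apply: NNPP => H; apply: Hn => z ez zy; rewrite leqNgt; apply/negP => lt.
    by apply: H; exists z.
  have nt := nt2 _ _ (proj1 hcy).
  have nez : ~ emitter lam Em z := fun h => disj Hs HSm HSp Hu nt h ez.
  exists z; split.
  + have [b hb] : exists b, EminusT lam Em z b.
      by apply: NNPP => H; apply: nez => b hb; apply: H; exists b.
    case: hb => [[hzb _]|[hbz [_ [hnm _]]]].
    * have [h1 _] := M1 _ _ hzb.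
      exists b, [:: b]; split; first by rewrite eq_sym.
      split; first by rewrite /is_journey /= h1.
      split=> //; split=> //; exact: M1 _ _ hzb.
    * have [u' [h1 [h2 h3]]] : exists u', Em b u' /\ u' != z /\ lam b z <= lam b u'.
        apply: NNPP => H; apply: hnm; split=> // u' h1 h2; rewrite ltnNge; apply/negP => h3.
        by apply: H; exists u'.
      have [q1 _] := M1 _ _ h1.
      have [q2 _] := M1 _ _ hbz.
      exists u', [:: b; u']; split=> //.
      split; last by split=> //; split=> //; exact: M1 _ _ h1.
      rewrite /is_journey /= q1 andbT.
      have -> : (z != b) by rewrite eq_sym.
      have hne : lam b z != lam b u' by apply: Hd; rewrite // eq_sym.
      rewrite /= (Hsym z b) ltn_neqAle h3 andbT hne //.
  + exists c, [:: y; z]; split.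
      by apply/eqP => e; subst; rewrite ltnn in lt.
    split; last by [].
    rewrite /is_journey /= (Hsym c y) lt andbT; apply/andP; split=> //; rewrite eq_sym (proj1 hcy) /= eq_sym zy //.
Qed.
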